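(* Let $b\ge 2$ and $k\ge 1$ be integers, set $B=b^k$, let $m\ge 1$ be an integer with $\gcd(m,b)=1$, and let $r$ be an integer with $0\le r<m$. Call an integer $s\ge 1$ admissible if $s\equiv r\pmod m$ and $\gcd(s,b)=1$. For admissible $s$, define $\omega_s:=\operatorname{ord}_{ms}(B)$ and $n_s:=\sum_{j=0}^{s-1} B^{j\omega_s}$. If $s$ and $s'$ are distinct admissible integers, then $n_s\neq n_{s'}$.
   Context: For integers $a$ and $N\ge 1$ with $\gcd(a,N)=1$, $\operatorname{ord}_N(a)$ denotes the least positive integer $\omega$ with $a^\omega\equiv 1\pmod N$ (so $\operatorname{ord}_1(a)=1$). *)

(* Defs.v *)
From mathcomp Require Import all_boot.
Set Implicit Arguments. Unset Strict Implicit. Unset Printing Implicit Defensive.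

(* For coprime a, N >= 1 such w exists and w <= N (indeed w <= totient N),
   so searching 1..N is exhaustive; we return 0 if no such w (non-coprime case,
   never used). Note ord 1 a = 1, since every a^w = 1 mod 1. *)
Definition ord (N a : nat) : nat :=
  let s := [seq w <- iota 1 N | a ^ w == 1 %[mod N]] in
  head 0 s.

Definition admissible (b m r s : nat) : Prop :=
  0 < s /\ s = r %[mod m] /\ coprime s b.

Definition n_of (B m s : nat) : nat :=
  \sum_(0 <= j < s) B ^ (j * ord (m * s) B).

(* Main.v *)
Require Import Defs.
From mathcomp Require Import all_boot all_fingroup all_solvable.
From mathcomp Require Import zify.

Lemma totient_le n : totient n <= n.
Proof.
rewrite totient_count_coprime.
apply: leq_trans (_ : \sum_(0 <= d < n) 1 <= n).
  by apply: leq_sum => i _; case: (coprime n i).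
by rewrite sum_nat_const_nat muln1 subn0.
Qed.

Lemma ord_pos N a : 0 < N -> coprime a N -> 0 < ord N a.
Proof.
move=> N0 cop; rewrite /ord.
have Ht : totient N \in [seq w <- iota 1 N | a ^ w == 1 %[mod N]].
  rewrite mem_filter mem_iota Euler_exp_totient // eqxx /=.
  have := totient_le N; rewrite -totient_gt0 in N0; lia.
case E: [seq w <- iota 1 N | a ^ w == 1 %[mod N]] => [|x l]; first by rewrite E in Ht.
have : x \in [seq w <- iota 1 N | a ^ w == 1 %[mod N]] by rewrite E mem_head.
by rewrite mem_filter mem_iota => /andP [_ /andP [H _]].
Qed.

Definition G c n := \sum_(0 <= j < n) c ^ j.

Lemma GS c n : G c n.+1 = 1 + c * G c n.
Proof.
rewrite /G big_nat_recl // expn0 big_distrr /=; congr (_ + _).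
by apply: eq_bigr => i _; rewrite expnS.
Qed.

Lemma Gr c n : G c n.+1 = G c n + c ^ n.
Proof. by rewrite /G big_nat_recr. Qed.

Lemma G_lt c s d : 0 < c -> G c s < G c (s + d.+1).
Proof.
move=> c0; elim: d => [|d IH].
  by rewrite addn1 Gr -addn1 leq_add2l expn_gt0 c0.
apply: (leq_trans IH); rewrite (addnS s d.+1) Gr; apply: leq_addr.
Qed.

Lemma G_inj c s t : 0 < c -> G c s = G c t -> s = t.
Proof.
move=> c0 E; case: (ltngtP s t) => // H.
  have := @G_lt c s (t - s).-1 c0; rewrite prednK ?subn_gt0 // subnKC ?(ltnW H) //.
  by rewrite E ltnn.
have := @G_lt c t (s - t).-1 c0; rewrite prednK ?subn_gt0 // subnKC ?(ltnW H) //.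
by rewrite E ltnn.
Qed.

Lemma Gmod b u n : 2 <= b -> 0 < u -> G (b ^ u) n.+1 %% b = 1.
Proof.
move=> b2 u0; rewrite GS -modnDmr.
have /eqP -> : (b ^ u * G (b ^ u) n) %% b == 0.
  by rewrite -/(dvdn _ _) dvdn_mulr // dvdn_exp.
by rewrite addn0 modn_small.
Qed.

Lemma val_eq b u v X Y : 2 <= b -> X %% b = 1 -> Y %% b = 1 ->
  b ^ u * X = b ^ v * Y -> u = v.
Proof.
move=> b2 HX HY.
wlog: u v X Y HX HY / u <= v.
  move=> W E; case: (leqP u v) => h; first exact: (W u v X Y HX HY h E).
  apply: esym; apply: (W v u Y X HY HX (ltnW h)); exact: esym.
move=> uv E; case: (ltngtP u v) (uv) => // h _.
rewrite -(subnKC uv) expnD -mulnA in E.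
move/eqP: E; rewrite eqn_pmul2l ?expn_gt0 ?(leq_trans _ b2) // => /eqP E.
have : b %| X by rewrite E dvdn_mulr // dvdn_exp // subn_gt0.
by rewrite /dvdn HX.
Qed.

Lemma key b u v s t : 2 <= b -> 0 < u -> 0 < v ->
  G (b ^ u) s = G (b ^ v) t -> s = t.
Proof.
move=> b2 u0 v0.
have c0 : forall w, 0 < b ^ w by move=> w; rewrite expn_gt0 (leq_trans _ b2).
have Gp : forall c n, 0 < G c n.+1 by move=> c n; rewrite GS.
case: s => [|s]; case: t => [|t] //.
- by move=> E; have := Gp (b ^ v) t; rewrite -E /G big_geq.
- by move=> E; have := Gp (b ^ u) s; rewrite E /G big_geq.
rewrite !GS => /addnI E.
case: s E => [|s]; case: t => [|t] //.
- rewrite /G big_geq // muln0 => /esym/eqP; rewrite muln_eq0 => /orP [].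
    by rewrite eqn0Ngt c0.
  by rewrite eqn0Ngt Gp.
- rewrite [G _ 0]/G big_geq // muln0 => /eqP; rewrite muln_eq0 => /orP [].
    by rewrite eqn0Ngt c0.
  by rewrite eqn0Ngt Gp.
move=> E.
have uv := @val_eq b u v _ _ b2 (@Gmod b u s b2 u0) (@Gmod b v t b2 v0) E.
subst v.
move/eqP: E; rewrite eqn_pmul2l // => /eqP E.
by have [->] := @G_inj (b ^ u) _ _ (c0 u) E.
Qed.

Theorem lemma5p2 (b k m r s s' : nat) :
  2 <= b -> 1 <= k -> 1 <= m -> coprime m b -> r < m ->
  admissible b m r s -> admissible b m r s' -> s <> s' ->
  n_of (b ^ k) m s <> n_of (b ^ k) m s'.
Proof.
move=> b2 k1 m1 cmb _ [s0 [_ csb]] [s0' [_ csb']] ne E.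
have nG : forall t, 0 < t -> coprime t b ->
  n_of (b ^ k) m t = G (b ^ (k * ord (m * t) (b ^ k))) t.
  move=> t _ _; rewrite /n_of /G; apply: eq_bigr => j _.
  by rewrite -!expnM; congr (_ ^ _); lia.
have op : forall t, 0 < t -> coprime t b -> 0 < k * ord (m * t) (b ^ k).
  move=> t t0 ct; rewrite muln_gt0 k1 /=; apply: ord_pos.
    by rewrite muln_gt0 m1.
  by rewrite coprimeXl // coprime_sym coprimeMl cmb.
apply: ne; apply: (@key b _ _ s s' b2 (op s s0 csb) (op s' s0' csb')).
by rewrite -nG // -nG.
Qed.
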